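(* Let $\mathcal{K}$ be a set of compact, orthogonally convex subsets of $\mathbb{R}^n$ that contains every singleton $\{x\}$ and satisfies $X+I\in\mathcal{K}$ whenever $X\in\mathcal{K}$ and $I$ is a compact interval. Then every monotone translation-invariant valuation on $\mathcal{K}$ is continuous with respect to the Hausdorff metric.
   Context: A subset $X\subseteq\mathbb{R}^n$ is orthogonally convex if $X\cap L$ is convex for every straight line $L$ parallel to a coordinate axis. An interval in $\mathbb{R}^n$ is a product of intervals in $\mathbb{R}$; $+$ is Minkowski sum. A valuation on $\mathcal{K}$ is a function $\phi\colon\mathcal{K}\to\mathbb{R}$ with $\phi(\emptyset)=0$ and $\phi(X\cup Y)=\phi(X)+\phi(Y)-\phi(X\cap Y)$ whenever $X,Y,X\cup Y,X\cap Y\in\mathcal{K}$. It is increasing if $X\subseteq Y$ implies $\phi(X)\le\phi(Y)$, monotone if $\phi$ or $-\phi$ is increasing, and translation-invariant if $\phi(X+a)=\phi(X)$ for all $X\in\mathcal{K}$, $a\in\mathbb{R}^n$. The Hausdorff distance between compact $X,Y$ is $\inf\{\delta>0: X\subseteq Y+\delta B_n,\ Y\subseteq X+\delta B_n\}$ with $B_n$ the closed unit ball of the $\ell_1$ norm (any norm gives the same notion of continuity). *)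

(* Defs.v *)
From HB Require Import structures.
From mathcomp Require Import all_boot all_order all_algebra.
From mathcomp Require Import all_classical all_reals all_analysis.
Set Implicit Arguments. Unset Strict Implicit. Unset Printing Implicit Defensive.
Import Order.TTheory GRing.Theory Num.Theory.
Import numFieldNormedType.Exports.
Local Open Scope classical_set_scope.
Local Open Scope ring_scope.

Section Defs.
Variables (R : realType) (n : nat).
Local Notation V := 'rV[R]_n.

Definition mink_sum (X Y : set V) : set V :=
  [set z | exists x y, X x /\ Y y /\ z = x + y].

Definition sscale (d : R) (X : set V) : set V := [set d *: x | x in X].

Definition l1_ball : set V := [set x | \sum_(i < n) `|x ord0 i| <= 1].

(* Hausdorff distance (extended real; +oo if no delta works) *)
Definition hausdorff_dist (X Y : set V) : \bar R :=
  ereal_inf [set d%:E | d in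
    [set d : R | 0 < d /\ X `<=` mink_sum Y (sscale d l1_ball)
                       /\ Y `<=` mink_sum X (sscale d l1_ball)]].

Definition convex_set (S : set V) : Prop :=
  forall x y, S x -> S y -> forall t : R, 0 <= t <= 1 ->
    S ((1 - t) *: x + t *: y).

Definition unitv (i : 'I_n) : V := \row_(j < n) (if j == i then 1 else 0).

Definition axis_line (a : V) (i : 'I_n) : set V := [set a + t *: unitv i | t in [set: R]].

Definition orth_convex (X : set V) : Prop :=
  forall a i, convex_set (X `&` axis_line a i).

Definition compact_interval (I : set V) : Prop :=
  exists a b : V, (forall i, a ord0 i <= b ord0 i) /\
    I = [set x | forall i, a ord0 i <= x ord0 i <= b ord0 i].

Definition is_valuation (K : set (set V)) (phi : set V -> R) : Prop :=
  (K set0 -> phi set0 = 0) /\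
  (forall X Y, K X -> K Y -> K (X `|` Y) -> K (X `&` Y) ->
     phi (X `|` Y) = phi X + phi Y - phi (X `&` Y)).

Definition increasing_on (K : set (set V)) (phi : set V -> R) : Prop :=
  forall X Y, K X -> K Y -> X `<=` Y -> phi X <= phi Y.

Definition monotone_on (K : set (set V)) (phi : set V -> R) : Prop :=
  increasing_on K phi \/ increasing_on K (fun X => - phi X).

Definition translation_invariant (K : set (set V)) (phi : set V -> R) : Prop :=
  forall X a, K X -> phi (mink_sum X [set a]) = phi X.

Definition hausdorff_continuous (K : set (set V)) (phi : set V -> R) : Prop :=
  forall X, K X -> forall e : R, 0 < e -> exists2 d : R, 0 < d &
    forall Y, K Y -> (hausdorff_dist X Y < d%:E)%E -> `|phi X - phi Y| < e.

End Defs.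

(* Main.v *)
Require Import Defs.
From HB Require Import structures.
From mathcomp Require Import all_boot all_order all_algebra.
From mathcomp Require Import all_classical all_reals all_analysis.
From mathcomp Require Import ring lra.
Import Order.TTheory GRing.Theory Num.Theory.
Import numFieldNormedType.Exports.
Local Open Scope classical_set_scope.
Local Open Scope ring_scope.
Set Implicit Arguments. Unset Strict Implicit.

Section Basic.
Variables (R : realType) (n : nat).
Local Notation V := 'rV[R]_n.
Local Notation e := (@unitv R n).

Definition box (a b : V) : set V := [set x | forall j, a ord0 j <= x ord0 j <= b ord0 j].
Definition sgm (i : 'I_n) (a b : R) : set V := [set x | exists r, a <= r <= b /\ x = r *: e i].

Lemma unitvE i j : e i ord0 j = if j == i then 1 else 0 :> R.
Proof. by rewrite mxE. Qed.

Lemma rowE (x y : V) : (forall j, x ord0 j = y ord0 j) -> x = y.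
Proof. by move=> h; apply/rowP => j; rewrite h. Qed.

Lemma box_ci (a b : V) : (forall j, a ord0 j <= b ord0 j) -> compact_interval (box a b).
Proof. by move=> h; exists a, b. Qed.

Lemma set1_box (a : V) : [set a] = box a a.
Proof.
rewrite /box; apply/seteqP; split => x /=.
  by move=> ->; move=> j; rewrite lexx.
move=> h; apply: rowE => j; by apply/eqP; rewrite eq_le; case/andP: (h j) => -> ->.
Qed.

Lemma set1_ci (a : V) : compact_interval [set a].
Proof. by rewrite set1_box; apply: box_ci. Qed.

Lemma sgm_box i a b : a <= b -> sgm i a b = box (a *: e i) (b *: e i).
Proof.
move=> ab; rewrite /box /sgm; apply/seteqP; split => x /=.
  case=> r [/andP[ar rb] ->] j; rewrite !mxE.
  by case: (j == i); rewrite ?mulr1 ?mulr0 ?lexx // ar rb.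
move=> h; exists (x ord0 i); split.
  by move: (h i); rewrite !mxE eqxx !mulr1.
apply: rowE => j; rewrite !mxE; case: eqP => [->|ji]; first by rewrite mulr1.
move: (h j); rewrite !mxE; case: eqP => // _; rewrite !mulr0 => hh.
by apply/eqP; rewrite eq_le andbC.
Qed.

Lemma sgm_ci i a b : a <= b -> compact_interval (sgm i a b).
Proof.
move=> ab; rewrite sgm_box //; apply: box_ci => j; rewrite !mxE.
by case: (j == i); rewrite ?mulr1 ?mulr0.
Qed.


Lemma mink_set1 (Z : set V) (a : V) z : mink_sum Z [set a] z <-> Z (z - a).
Proof.
split; first by case=> x [y [Zx [-> ->]]]; rewrite addrK.
by move=> h; exists (z - a), a; split => //; split => //; rewrite subrK.
Qed.

Lemma union_eq (Z : set V) i s t : 0 <= s -> 0 <= t ->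
  mink_sum Z (sgm i 0 s) `|` mink_sum Z (sgm i s (s + t)) = mink_sum Z (sgm i 0 (s + t)).
Proof.
move=> s0 t0; apply/seteqP; split => z.
  case=> -[x [y [Zx [[r [/andP[r1 r2] ->] ->]]]]]; exists x, (r *: e i);
    (split => //; split => //); exists r; split => //; apply/andP; split; lra.
case=> x [y [Zx [[r [/andP[r1 r2] ->] ->]]]].
case: (lerP r s) => rs.
  by left; exists x, (r *: e i); split => //; split => //; exists r; rewrite r1 rs.
right; exists x, (r *: e i); split => //; split => //; exists r; split => //.
by apply/andP; split; lra.
Qed.

Lemma inter_eq (Z : set V) i s t : orth_convex Z -> 0 <= s -> 0 <= t ->
  mink_sum Z (sgm i 0 s) `&` mink_sum Z (sgm i s (s + t)) = mink_sum Z [set s *: e i].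
Proof.
move=> oc s0 t0; apply/seteqP; split => z.
  case=> -[x [y [Zx [[a [/andP[a1 a2] ->] hz0]]]]] [x' [y' [Zx' [[b [/andP[b1 b2] ->] hz]]]]].
  apply/mink_set1.
  have hx' : x' = x + (a - b) *: e i.
    by apply: rowE => j; move/(congr1 (fun v : V => v ord0 j)): hz; rewrite hz0 !mxE => hz; lra.
  have -> : z - s *: e i = x + (a - s) *: e i.
    by rewrite hz0; apply: rowE => j; rewrite !mxE; lra.
  case: (eqVneq a b) => [ab|ab].
    have -> : a - s = 0 by lra.
    by rewrite scale0r addr0.
  have ba : 0 < b - a by rewrite subr_gt0 lt_neqAle ab andTb; lra.
  have := oc x i x (x + (a - b) *: e i).
  have Lx : axis_line x i x by exists 0 => //; rewrite scale0r addr0.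
  have Lx' : axis_line x i (x + (a - b) *: e i) by exists (a - b).
  rewrite hx' in Zx'.
  move=> /(_ (conj Zx Lx)) /(_ (conj Zx' Lx')).
  move=> /(_ ((s - a) / (b - a))) [].
    apply/andP; split; first by apply: divr_ge0; lra.
    by rewrite ler_pdivrMr // mul1r; lra.
  move=> h _; move: h; congr Z; apply: rowE => j; rewrite !mxE.
  by field; lra.
move=> /mink_set1 h; split.
  exists (z - s *: e i), (s *: e i); split => //; split; last by rewrite subrK.
  by exists s; rewrite s0 lexx.
exists (z - s *: e i), (s *: e i); split => //; split; last by rewrite subrK.
by exists s; split => //; apply/andP; split; lra.
Qed.

Lemma shift_eq (Z : set V) i s t : 
  mink_sum Z (sgm i s (s + t)) = mink_sum (mink_sum Z (sgm i 0 t)) [set s *: e i].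
Proof.
apply/seteqP; split => z.
  case=> x [y [Zx [[r [/andP[r1 r2] ->] ->]]]]; apply/mink_set1.
  exists x, ((r - s) *: e i); split => //; split.
    by exists (r - s); split => //; apply/andP; split; lra.
  by rewrite scalerBl addrA.
move/mink_set1 => [x [y [Zx [[r [/andP[r1 r2] ->] hz]]]]].
exists x, ((r + s) *: e i); split => //; split.
  by exists (r + s); split => //; apply/andP; split; lra.
by rewrite scalerDl addrA -hz subrK.
Qed.

End Basic.

Section Main.
Variables (R : realType) (n : nat) (K : set (set 'rV[R]_n)).
Local Notation V := 'rV[R]_n.
Local Notation e := (@unitv R n).
Hypothesis hK : forall X, K X -> compact X /\ orth_convex X.
Hypothesis hsing : forall x : V, K [set x].
Hypothesis hsum : forall X I, K X -> compact_interval I -> K (mink_sum X I).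
Variable phi : set V -> R.
Hypothesis hval : forall X Y, K X -> K Y -> K (X `|` Y) -> K (X `&` Y) ->
     phi (X `|` Y) = phi X + phi Y - phi (X `&` Y).
Hypothesis hinc : increasing_on K phi.
Hypothesis htr : translation_invariant K phi.

Let g Z i r := phi (mink_sum Z (sgm i 0 r)).

Lemma Ksgm Z i a b : K Z -> a <= b -> K (mink_sum Z (sgm i a b)).
Proof. by move=> KZ ab; apply: hsum => //; apply: sgm_ci. Qed.

Lemma addit Z i s t : K Z -> 0 <= s -> 0 <= t -> g Z i (s + t) = g Z i s + g Z i t - phi Z.
Proof.
move=> KZ s0 t0; rewrite /g -union_eq // hval.
- rewrite inter_eq //; last by case: (hK KZ).
  by rewrite htr // shift_eq htr //; apply: Ksgm.
- by apply: Ksgm.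
- by apply: Ksgm => //; lra.
- by rewrite union_eq //; apply: Ksgm => //; lra.
- by rewrite inter_eq //; [apply: hsum => //; apply: set1_ci | case: (hK KZ)].
Qed.

Lemma slope Z i u k : K Z -> 0 <= u ->
  g Z i (k.+1%:R * u) - phi Z = k.+1%:R * (g Z i u - phi Z).
Proof.
move=> KZ u0; elim: k => [|k IH]; first by rewrite !mul1r.
have -> : k.+2%:R * u = k.+1%:R * u + u by rewrite -[k.+2]addn1 natrD; ring.
rewrite addit //; last by apply: mulr_ge0.
rewrite -[k.+2]addn1 natrD mulrDl mul1r -IH; ring.
Qed.


Fixpoint chain (W : set V) (u : R) (l : seq 'I_n) : set V :=
  match l with [::] => W | i :: l' => mink_sum (chain W u l') (sgm i 0 u) end.

Lemma chainK W u l : K W -> 0 <= u -> K (chain W u l).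
Proof. by move=> KW u0; elim: l => [|i l IH] //=; apply: Ksgm. Qed.

Lemma chain_w W u l w : 0 <= u -> W w -> chain W u l w.
Proof.
move=> u0 Ww; elim: l => [|i l IH] //=; exists w, 0; split => //; split; last by rewrite addr0.
by exists 0; rewrite scale0r lexx u0.
Qed.

Lemma chain_sub (W : set V) u l (z : V) : 0 <= u -> chain W u l z ->
  exists w, W w /\ forall j, 0 <= (z - w) ord0 j <= u * (size l)%:R.
Proof.
move=> u0; elim: l z => [|i l IH] z /=.
  by move=> Wz; exists z; split => // j; rewrite subrr !mxE mulr0 lexx.
case=> z' [y [/IH [w [Ww hw]] [[r [/andP[r1 r2] ->] ->]]]].
exists w; split => // j; move: (hw j); rewrite !mxE ?unitvE => /andP[h1 h2].
rewrite -[(size l).+1]addn1 natrD mulrDr mulr1.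
by case: (j == i); rewrite ?mulr1 ?mulr0; apply/andP; split; lra.
Qed.

Lemma chain_sup (W : set V) u l (z w : V) : uniq l -> W w ->
  (forall j, 0 <= (z - w) ord0 j <= (if j \in l then u else 0)) -> chain W u l z.
Proof.
elim: l z => [|i l IH] z /=.
  move=> _ Ww h; have -> : z = w; last by [].
  by apply: rowE => j; move: (h j); rewrite !mxE => hh; lra.
move=> /andP[il ul] Ww h.
exists (z - (z - w) ord0 i *: e i), ((z - w) ord0 i *: e i); split.
  apply: (IH _ ul Ww) => j; move: (h j); rewrite !mxE ?unitvE in_cons.
  case: (eqVneq j i) => [->|ji] /=; first by rewrite (negbTE il) mulr1 => _; lra.
  by rewrite mulr0 subr0.
split; last by rewrite subrK.
exists ((z - w) ord0 i); split => //; move: (h i); rewrite in_cons eqxx.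
by rewrite !mxE.
Qed.


Definition bigM (X : set V) :=
  phi (mink_sum X (box (const_mx (-1)) (const_mx (n.+2)%:R))).

Definition nearS (W X : set V) :=
  forall w, W w -> exists x, X x /\ forall j, -1 <= (w - x) ord0 j <= 1.

Lemma p0_le (Z : set V) z : K Z -> Z z -> phi [set 0] <= phi Z.
Proof.
move=> KZ Zz; have -> : phi [set 0] = phi [set z].
  have -> : [set z] = mink_sum [set 0] [set z].
    apply/seteqP; split => y.
      by move=> /= ->; exists 0, z; rewrite add0r.
    by case=> a [b [/= -> [/= -> ->]]]; rewrite add0r.
  by rewrite htr.
by apply: hinc => // y /= ->.
Qed.

Lemma step (X W : set V) l i m : K X -> K W -> nearS W X -> (size l <= n)%N -> (0 < m)%N ->
  (exists w, W w) ->
  phi (chain W m%:R^-1 (i :: l)) - phi (chain W m%:R^-1 l) <= (bigM X - phi [set 0]) / m%:R.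
Proof.
move=> KX KW nW sl m0 [w0 Ww0].
have mR : 0 < m%:R :> R by rewrite ltr0n.
pose u : R := m%:R^-1.
have u0 : 0 <= u by rewrite invr_ge0 ltW.
have u1 : u <= 1 by rewrite invf_le1 // ler1n.
set Z := chain W u l.
have KZ : K Z by apply: chainK.
have hs := slope i m.-1 KZ u0.
rewrite prednK // mulfV ?gt_eqF // in hs.
rewrite /= ler_pdivlMr // mulrC -hs.
have hZ : phi [set 0] <= phi Z by apply: (p0_le (z := w0)) => //; apply: chain_w.
suff : g Z i 1 <= bigM X by lra.
apply: hinc; first by apply: Ksgm.
  by apply: hsum => //; apply: box_ci => j; rewrite !mxE; have := ler0n R n.+2; lra.
move=> z [z' [y [Zz' [[r [/andP[r1 r2] ->] ->]]]]].
have [w [Ww hw]] := chain_sub u0 Zz'.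
have [x [Xx hx]] := nW _ Ww.
exists x, (z' + r *: e i - x); split => //; split; last by rewrite addrCA subrr addr0.
have hu : u * (size l)%:R <= n%:R.
  apply: (@le_trans _ _ (1 * (size l)%:R)); first by apply: ler_wpM2r.
  by rewrite mul1r ler_nat.
move=> j; move: (hw j) (hx j); rewrite !mxE.
case: (j == i); rewrite ?mulr1 ?mulr0 => /andP[h1 h2] /andP[h3 h4];
  rewrite -[n.+2]addn2 natrD; apply/andP; split; lra.
Qed.


Lemma tele (X W : set V) l m : K X -> K W -> nearS W X -> (size l <= n)%N -> (0 < m)%N ->
  (exists w, W w) ->
  phi (chain W m%:R^-1 l) <= phi W + (size l)%:R * ((bigM X - phi [set 0]) / m%:R).
Proof.
move=> KX KW nW + m0 hw; elim: l => [|i l IH] /= sl; first by rewrite mul0r addr0.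
have := step i KX KW nW (ltnW sl) m0 hw; have := IH (ltnW sl).
rewrite -[(size l).+1]addn1 natrD mulrDl ?mul1r; lra.
Qed.

Lemma cover (W : set V) u (z : V) :
  (exists w, W w /\ forall j, 0 <= (z - w) ord0 j <= u) -> chain W u (enum 'I_n) z.
Proof.
case=> w [Ww h]; apply: (chain_sup (w := w)) => //; first exact: enum_uniq.
by move=> j; rewrite mem_enum.
Qed.

Lemma ballP (d : R) (v : V) : sscale d (@l1_ball R n) v -> 0 <= d -> forall j, `|v ord0 j| <= d.
Proof.
case=> b /= hb <- d0 j; rewrite mxE normrM ger0_norm //.
rewrite -[leRHS]mulr1; apply: ler_wpM2l => //; apply: le_trans hb.
rewrite (bigD1 j) //= lerDl; apply: sumr_ge0 => k _; exact: normr_ge0.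
Qed.


Lemma dist_lt (X Y : set V) d : (hausdorff_dist X Y < d%:E)%E ->
  exists d', [/\ 0 < d', d' < d, X `<=` mink_sum Y (sscale d' (@l1_ball R n)) &
     Y `<=` mink_sum X (sscale d' (@l1_ball R n))].
Proof.
move/ereal_inf_lt => [_ [d' [d0 [h1 h2]] <-]]; rewrite lte_fin => hd.
by exists d'.
Qed.

Lemma main_inc : hausdorff_continuous K phi.
Proof.
move=> X KX eps eps0.
case: (pselect (exists x, X x)) => [[x0 Xx0]|nX]; last first.
  exists 1 => // Y KY /dist_lt [d' [_ _ _ h2]].
  have X0 : X = set0 by apply/seteqP; split => x // Xx; apply: nX; exists x.
  have -> : Y = X.
    rewrite X0; apply/seteqP; split => y // /h2 [x [_ [Xx _]]]; by apply: nX; exists x.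
  by rewrite subrr normr0.
set B := n%:R * (bigM X - phi [set 0]).
set m := (Num.truncn (B / eps)).+1.
have m0 : (0 < m)%N by [].
have mR : 0 < m%:R :> R by rewrite ltr0n.
have hm : B / eps < m%:R by apply: truncnS_gt.
have hBm : B / m%:R < eps.
  by rewrite ltr_pdivrMr // mulrC -ltr_pdivrMr.
pose u : R := m%:R^-1.
have u0 : 0 < u by rewrite invr_gt0.
have u1 : u <= 1 by rewrite invf_le1 // ler1n.
exists (u / 2); first by apply: divr_gt0.
move=> Y KY /dist_lt [d' [d0 dd h1 h2]].
have d1 : d' <= 1 by lra.
set c : V := const_mx (u / 2).
have [y0 Yy0] : exists y, Y y.
  by case: (h1 _ Xx0) => y [v [Yy _]]; exists y.
have nY : nearS Y X.
  move=> y /h2 [x [v [Xx [hv ->]]]]; exists x; split => // j.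
  have := ballP hv (ltW d0) j; rewrite addrC addKr -ler_norml; lra.
have nX : nearS X X.
  by move=> x Xx; exists x; split => // j; rewrite subrr mxE; lra.
have KXc : K (mink_sum X [set c]) by apply: hsum => //; apply: set1_ci.
have KYc : K (mink_sum Y [set c]) by apply: hsum => //; apply: set1_ci.
have ineq1 : phi X <= phi Y + B / m%:R.
  rewrite -(htr c KX).
  apply: (le_trans (y := phi (chain Y u (enum 'I_n)))).
    apply: hinc => //; first by apply: chainK => //; apply: ltW.
    move=> z /mink_set1 /h1 [y [v [Yy [hv hz]]]]; apply: cover; exists y; split => // j.
    have := ballP hv (ltW d0) j; rewrite ler_norml.
    have -> : (z - y) ord0 j = v ord0 j + u / 2.
      by move/(congr1 (fun w : V => w ord0 j)): hz; rewrite !mxE => hz; lra.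
    lra.
  have := tele (l := enum 'I_n) KX KY nY _ m0 (ex_intro _ y0 Yy0).
  rewrite size_enum_ord leqnn => /(_ isT); rewrite /B mulrA; lra.
have ineq2 : phi Y <= phi X + B / m%:R.
  rewrite -(htr c KY).
  apply: (le_trans (y := phi (chain X u (enum 'I_n)))).
    apply: hinc => //; first by apply: chainK => //; apply: ltW.
    move=> z /mink_set1 /h2 [x [v [Xx [hv hz]]]]; apply: cover; exists x; split => // j.
    have := ballP hv (ltW d0) j; rewrite ler_norml.
    have -> : (z - x) ord0 j = v ord0 j + u / 2.
      by move/(congr1 (fun w : V => w ord0 j)): hz; rewrite !mxE => hz; lra.
    lra.
  have := tele (l := enum 'I_n) KX KX nX _ m0 (ex_intro _ x0 Xx0).
  rewrite size_enum_ord leqnn => /(_ isT); rewrite /B mulrA; lra.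
rewrite ltr_norml; apply/andP; split; lra.
Qed.

End Main.

Unset Implicit Arguments.
Set Strict Implicit.

Theorem theorem4p2 (R : realType) (n : nat) (K : set (set 'rV[R]_n))
  (hK : forall X, K X -> compact X /\ orth_convex X)
  (hsing : forall x : 'rV[R]_n, K [set x])
  (hsum : forall X I, K X -> compact_interval I -> K (mink_sum X I)) :
  forall phi : set 'rV[R]_n -> R,
    is_valuation K phi -> monotone_on K phi -> translation_invariant K phi ->
    hausdorff_continuous K phi.
Proof.
move=> phi [_ hval] [hinc|hdec] htr.
  exact: (main_inc hK hsing hsum hval hinc htr).
have hval' : forall X Y, K X -> K Y -> K (X `|` Y) -> K (X `&` Y) ->
    - phi (X `|` Y) = - phi X + - phi Y - - phi (X `&` Y).
  by move=> X Y KX KY KU KI; rewrite hval //; ring.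
have htr' : translation_invariant K (fun X => - phi X).
  by move=> X a KX /=; rewrite htr.
have := main_inc hK hsing hsum hval' hdec htr'.
move=> h X KX eps eps0; have [d d0 hd] := h X KX eps eps0.
exists d => // Y KY hY; have := hd Y KY hY.
by rewrite -opprD normrN addrC.
Qed.
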